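(* Let $(S,\to)$ be a labelled transition system, $\mathcal{C}$ a consistent colouring and $s\in S$. Then a sequence $\sigma$ is a complete $\mathcal{C}$-coloured trace of $s$ if and only if $\sigma$ is a $\mathcal{C}$-coloured trace of $s$ that is infinite, or is a divergent $\mathcal{C}$-coloured trace of $s$, or is maximal in the sense that it is not a proper prefix of any $\mathcal{C}$-coloured trace of $s$.
   Context: Fix a set $\mathrm{Act}$ of actions containing a special action $\tau$. An LTS is $(S,\to)$ with $\to\subseteq S\times\mathrm{Act}\times S$. A path from $s$ is an alternating sequence $s_0,a_1,s_1,a_2,\dots$ (ending with a state if finite) with $s_0=s$ and $s_{k-1}\xrightarrow{a_k}s_k$; it is maximal if infinite or if its last state has no outgoing transitions. A colouring is a function $\mathcal{C}$ from $S$ into an arbitrary set of colours. For a path $\pi$, $\mathcal{C}(\pi)$ is obtained from $\mathcal{C}(s_0),a_1,\mathcal{C}(s_1),a_2,\dots$ by contracting every finite maximal consecutive subsequence $C,\tau,C,\tau,\dots,\tau,C$ and every infinite one $C,\tau,C,\tau,\dots$ to $C$. For $\pi$ a path from $s$, $\mathcal{C}(\pi)$ is a $\mathcal{C}$-coloured trace of $s$; it is a complete $\mathcal{C}$-coloured trace of $s$ if $\pi$ is maximal, and a divergent $\mathcal{C}$-coloured trace of $s$ if $\pi$ is infinite and $\mathcal{C}(\pi)$ is finite. $\mathcal{C}$ is consistent if any two states of equal colour have the same $\mathcal{C}$-coloured traces. *)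

(* Defs.v *)
From Stdlib Require Import List Arith Sorting.Sorted.
Import ListNotations.
Set Implicit Arguments.

Inductive seqx (X : Type) : Type :=
| SFin (l : list X)
| SInf (f : nat -> X).
Arguments SFin {X} l.
Arguments SInf {X} f.

Definition nth_opt {X : Type} (u : seqx X) (i : nat) : option X :=
  match u with
  | SFin l => nth_error l i
  | SInf f => Some (f i)
  end.

Section LTS.
Variables (Act : Type) (tau : Act) (St : Type) (trans : St -> Act -> St -> Prop)
          (Col : Type) (C : St -> Col).

(* A path s0,a1,s1,a2,s2,... from s0 is represented by s0 together with the
   (finite or infinite) sequence u of steps (a1,s1),(a2,s2),...
   [prev s u i] is the state s_i, i.e. the source state of step i (0-based). *)
Definition prev (s : St) (u : seqx (Act * St)) (i : nat) : St :=
  match i with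
  | 0 => s
  | S j => match nth_opt u j with Some (_, t) => t | None => s end
  end.

Definition is_path (s : St) (u : seqx (Act * St)) : Prop :=
  forall i a t, nth_opt u i = Some (a, t) -> trans (prev s u i) a t.

Definition maximal_path (s : St) (u : seqx (Act * St)) : Prop :=
  match u with
  | SInf _ => True
  | SFin l => forall a t, ~ trans (prev s u (length l)) a t
  end.

(* A C-coloured sequence C0,a1,C1,a2,C2,... is represented by its first colour
   and the (finite or infinite) sequence of pairs (a_k, C_k). *)
Definition cseq : Type := (Col * seqx (Act * Col))%type.

(* Step i of the path survives the contraction iff it is not a stuttering
   step C,tau,C (i.e. a tau-step between states of equal colour). Contracting
   every maximal block C,tau,C,...,tau,C (finite or infinite) to C amounts to
   deleting exactly these steps. *)
Definition kept (s : St) (u : seqx (Act * St)) (n : nat) : Prop :=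
  exists a t, nth_opt u n = Some (a, t) /\ (a <> tau \/ C t <> C (prev s u n)).

Definition colouring_of (s : St) (u : seqx (Act * St)) (sigma : cseq) : Prop :=
  fst sigma = C s /\
  match snd sigma with
  | SFin l =>
      exists idx : list nat,
        StronglySorted lt idx /\
        (forall n, kept s u n <-> In n idx) /\
        Forall2 (fun n x => exists a t, nth_opt u n = Some (a, t) /\ x = (a, C t)) idx l
  | SInf g =>
      exists h : nat -> nat,
        (forall k, h k < h (S k)) /\
        (forall n, kept s u n <-> exists k, h k = n) /\
        (forall k, exists a t, nth_opt u (h k) = Some (a, t) /\ g k = (a, C t))
  end.

Definition ctrace (s : St) (sigma : cseq) : Prop :=
  exists u, is_path s u /\ colouring_of s u sigma.

Definition complete_ctrace (s : St) (sigma : cseq) : Prop :=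
  exists u, is_path s u /\ maximal_path s u /\ colouring_of s u sigma.

Definition is_infinite_seq (sigma : cseq) : Prop :=
  match snd sigma with SInf _ => True | SFin _ => False end.

Definition divergent_ctrace (s : St) (sigma : cseq) : Prop :=
  exists f, is_path s (SInf f) /\ colouring_of s (SInf f) sigma /\
            ~ is_infinite_seq sigma.

Definition proper_prefix (sigma sigma' : cseq) : Prop :=
  fst sigma = fst sigma' /\
  match snd sigma, snd sigma' with
  | SFin l, SFin l' => exists m, m <> [] /\ l' = l ++ m
  | SFin l, SInf g => forall k, k < length l -> nth_error l k = Some (g k)
  | SInf _, _ => False
  end.

Definition consistent : Prop :=
  forall s1 s2, C s1 = C s2 -> forall sigma, ctrace s1 sigma <-> ctrace s2 sigma.

End LTS.

(* Main.v *)
Require Import Defs.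
From Stdlib Require Import List Arith Lia Sorting.Sorted Classical ClassicalEpsilon.
Import ListNotations.
Set Implicit Arguments.

Section H.
Variables (Act : Type) (tau : Act) (St : Type) (trans : St -> Act -> St -> Prop)
          (Col : Type) (C : St -> Col).

Lemma nth_opt_closed (u : seqx (Act*St)) i j p :
  nth_opt u j = Some p -> i <= j -> exists q, nth_opt u i = Some q.
Proof.
  destruct u as [l|f]; simpl; intros H Hij; [|eauto].
  destruct (nth_error l i) eqn:E; [eauto|].
  apply nth_error_None in E. assert (j < length l) by (apply nth_error_Some; congruence). lia.
Qed.

Lemma nth_opt_closed' X (u : seqx X) i j p :
  nth_opt u j = Some p -> i <= j -> exists q, nth_opt u i = Some q.
Proof.
  destruct u as [l|f]; simpl; intros H Hij; [|eauto].
  destruct (nth_error l i) eqn:E; [eauto|].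
  apply nth_error_None in E. assert (j < length l) by (apply nth_error_Some; congruence). lia.
Qed.

Lemma prev_agree (s:St) (u u' : seqx (Act*St)) i :
  (forall j, j < i -> nth_opt u j = nth_opt u' j) -> prev s u i = prev s u' i.
Proof. intros H; destruct i; simpl; auto. rewrite H; auto. Qed.

Lemma kept_agree (s:St) (u u' : seqx (Act*St)) n :
  (forall j, j <= n -> nth_opt u j = nth_opt u' j) ->
  (kept tau C s u n <-> kept tau C s u' n).
Proof.
  intros H. unfold kept. rewrite (H n) by lia.
  rewrite (@prev_agree s u u' n) by (intros; apply H; lia). tauto.
Qed.

Lemma not_kept_col (s:St) (u : seqx (Act*St)) n a t :
  nth_opt u n = Some (a, t) -> ~ kept tau C s u n -> C t = C (prev s u n).
Proof.
  intros E NK. apply NNPP. intro Hc. apply NK. exists a, t. auto.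
Qed.

Lemma stutter_col (s:St) (u : seqx (Act*St)) m n :
  m <= n ->
  (forall i, i < n -> exists p, nth_opt u i = Some p) ->
  (forall i, m <= i -> i < n -> ~ kept tau C s u i) ->
  C (prev s u n) = C (prev s u m).
Proof.
  induction n; intros Hmn Hv Hk.
  - assert (m = 0) by lia; subst; auto.
  - destruct (Nat.eq_dec m (S n)); [subst; auto|].
    destruct (Hv n ltac:(lia)) as [[a t] E].
    rewrite <- IHn by (auto; lia).
    pose proof (@not_kept_col s u n a t E (Hk n ltac:(lia) ltac:(lia))).
    simpl. rewrite E. auto.
Qed.


Lemma ss_nth (l : list nat) i j :
  StronglySorted lt l -> i < j -> j < length l -> nth i l 0 < nth j l 0.
Proof.
  intros H; revert i j; induction H as [|x l H IH Hf]; simpl; intros i j Hij Hj; [lia|].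
  destruct j; [lia|]. destruct i.
  - rewrite Forall_forall in Hf. apply Hf, nth_In; lia.
  - apply IH; lia.
Qed.

Lemma F2_nth X Y (R : X -> Y -> Prop) a b j x d :
  Forall2 R a b -> nth_error b j = Some x -> j < length a /\ R (nth j a d) x.
Proof.
  intros H; revert j; induction H; intros j E; [destruct j; discriminate|].
  destruct j; simpl in *.
  - inversion E; subst; split; [lia|auto].
  - destruct (IHForall2 j E); split; [lia|auto].
Qed.

Definition Enum (s : St) (u : seqx (Act*St)) (sq : seqx (Act*Col)) (K : nat -> nat) :=
  (forall j x, nth_opt sq j = Some x ->
     exists a t, nth_opt u (K j) = Some (a,t) /\ x = (a, C t) /\ kept tau C s u (K j)) /\
  (forall i, kept tau C s u i -> exists j x, nth_opt sq j = Some x /\ K j = i) /\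
  (forall j1 j2 x, j1 < j2 -> nth_opt sq j2 = Some x -> K j1 < K j2).

Lemma enum_of s u sigma :
  colouring_of tau C s u sigma -> exists K, Enum s u (snd sigma) K.
Proof.
  intros [_ H]. destruct (snd sigma) as [l|g].
  - destruct H as [idx [Hs [Hk HF]]]. exists (fun j => nth j idx 0).
    pose proof (Forall2_length HF) as HL.
    split; [|split].
    + intros j x E. simpl in E. destruct (@F2_nth _ _ _ _ _ j x 0 HF E) as [Hj [a [t [E1 E2]]]].
      exists a, t. split; [auto|split; [auto|]]. apply Hk, nth_In; auto.
    + intros i Ki. apply Hk in Ki. apply In_nth with (d := 0) in Ki.
      destruct Ki as [j [Hj Hn]]. destruct (nth_error l j) eqn:E.
      * exists j, p; auto.
      * apply nth_error_None in E; lia.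
    + intros j1 j2 x Hlt E. simpl in E.
      assert (j2 < length l) by (apply nth_error_Some; congruence).
      apply ss_nth; auto; lia.
  - destruct H as [h [Hm [Hk Hg]]]. exists h. split; [|split].
    + intros j x E. simpl in E. inversion E; subst.
      destruct (Hg j) as [a [t [E1 E2]]]. exists a, t. repeat split; auto.
      apply Hk; eauto.
    + intros i Ki. apply Hk in Ki. destruct Ki as [j Hj]. exists j, (g j); auto.
    + intros j1 j2 x Hlt _. induction Hlt; [apply Hm|]. specialize (Hm m); lia.
Qed.

Lemma enum_inv s u sq K j1 j2 x :
  Enum s u sq K -> nth_opt sq j2 = Some x -> K j1 < K j2 -> nth_opt sq j1 <> None -> j1 < j2.
Proof.
  intros [_ [_ H3]] E Hlt N.
  destruct (Nat.lt_ge_cases j1 j2); auto.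
  destruct (nth_opt sq j1) eqn:E1; [|congruence].
  destruct (Nat.eq_dec j1 j2); [subst; lia|].
  specialize (H3 j2 j1 p ltac:(lia) E1). lia.
Qed.

Definition colat (c0 : Col) (sq : seqx (Act*Col)) (j : nat) (c : Col) : Prop :=
  match j with 0 => c = c0 | S j0 => exists a, nth_opt sq j0 = Some (a, c) end.

Lemma col_before s u sq K j x :
  Enum s u sq K -> nth_opt sq j = Some x -> colat (C s) sq j (C (prev s u (K j))).
Proof.
  intros HE E. pose proof HE as [H1 [H2 H3]].
  destruct (H1 j x E) as [a [t [Et [_ _]]]].
  assert (Hv : forall i, i < K j -> exists p, nth_opt u i = Some p)
    by (intros; eapply nth_opt_closed; eauto; lia).
  destruct j as [|j0]; simpl.
  - rewrite (@stutter_col s u 0 (K 0)); auto; [lia|].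
    intros i _ Hi Ki. destruct (H2 i Ki) as [j' [x' [E' Hj']]]. subst i.
    assert (j' < 0) by (eapply enum_inv; eauto; congruence). lia.
  - destruct (@nth_opt_closed' _ sq j0 (S j0) x E ltac:(lia)) as [x0 E0].
    destruct (H1 j0 x0 E0) as [a0 [t0 [Et0 [-> _]]]].
    pose proof (H3 j0 (S j0) x ltac:(lia) E).
    exists a0. rewrite E0. f_equal. f_equal.
    rewrite (@stutter_col s u (S (K j0)) (K (S j0))); auto; [simpl; rewrite Et0; auto|].
    intros i Hi1 Hi2 Ki. destruct (H2 i Ki) as [j' [x' [E' Hj']]]. subst i.
    assert (j' < S j0) by (eapply enum_inv; eauto; congruence).
    assert (j' = j0 \/ j' < j0) as [->|Hl] by lia; [lia|].
    specialize (H3 j' j0 _ Hl E0). lia.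
Qed.

Lemma col_end s lu l K :
  Enum s (SFin lu) (SFin l) K -> colat (C s) (SFin l) (length l) (C (prev s (SFin lu) (length lu))).
Proof.
  intros HE. pose proof HE as [H1 [H2 H3]].
  assert (Hv : forall i, i < length lu -> exists p, nth_opt (SFin lu) i = Some p).
  { intros i Hi. simpl. destruct (nth_error lu i) eqn:E; eauto. apply nth_error_None in E; lia. }
  destruct (length l) as [|j0] eqn:HL; simpl.
  - rewrite (@stutter_col s _ 0 (length lu)); auto; [lia|].
    intros i _ Hi Ki. destruct (H2 i Ki) as [j' [x' [E' _]]]. simpl in E'.
    assert (j' < length l) by (apply nth_error_Some; congruence). lia.
  - assert (E0 : exists x0, nth_error l j0 = Some x0).
    { destruct (nth_error l j0) eqn:E; eauto. apply nth_error_None in E; lia. }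
    destruct E0 as [x0 E0].
    destruct (H1 j0 x0 E0) as [a0 [t0 [Et0 [-> _]]]].
    assert (K j0 < length lu) by (simpl in Et0; apply nth_error_Some; congruence).
    exists a0. rewrite E0. f_equal. f_equal.
    rewrite (@stutter_col s _ (S (K j0)) (length lu)); auto; [simpl in *; rewrite Et0; auto|].
    intros i Hi1 Hi2 Ki. destruct (H2 i Ki) as [j' [x' [E' Hj']]]. subst i. simpl in E'.
    assert (j' < length l) by (apply nth_error_Some; congruence).
    assert (j' = j0 \/ j' < j0) as [->|Hl] by lia; [lia|].
    specialize (H3 j' j0 _ Hl E0). lia.
Qed.

Lemma fin_path_fin_trace s lu sigma :
  colouring_of tau C s (SFin lu) sigma -> exists l, snd sigma = SFin l.
Proof.
  intros Hc. destruct (enum_of Hc) as [K HE]. destruct (snd sigma) as [l|g]; eauto.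
  exfalso. destruct HE as [H1 [_ H3]].
  assert (forall j, j <= K j).
  { induction j; [lia|]. specialize (H3 j (S j) (g (S j)) ltac:(lia) eq_refl). lia. }
  destruct (H1 (length lu) (g (length lu)) eq_refl) as [a [t [E _]]].
  simpl in E. assert (K (length lu) < length lu) by (apply nth_error_Some; congruence).
  specialize (H (length lu)). lia.
Qed.


Lemma colat_fun c0 sq j c1 c2 : colat c0 sq j c1 -> colat c0 sq j c2 -> c1 = c2.
Proof.
  destruct j; simpl; [congruence|]. intros [a1 E1] [a2 E2]. rewrite E1 in E2. congruence.
Qed.

Lemma one_step (P : St) a t :
  trans P a t -> (a <> tau \/ C t <> C P) ->
  ctrace tau trans C P (C P, SFin [(a, C t)]).
Proof.
  intros Ht Hk. exists (SFin [(a,t)]). split.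
  - intros i b t' E. destruct i; simpl in E; [inversion E; subst; auto|destruct i; discriminate].
  - split; [auto|]. simpl. exists [0]. split; [repeat constructor|split].
    + intros n; split.
      * intros [b [t' [E _]]]. destruct n; [left; auto|destruct n; discriminate].
      * intros [<-|[]]. exists a, t. auto.
    + constructor; [|constructor]. exists a, t. auto.
Qed.

Lemma fwd_fin (cons : consistent tau trans C) s lu sigma :
  is_path trans s (SFin lu) -> maximal_path trans s (SFin lu) ->
  colouring_of tau C s (SFin lu) sigma ->
  ~ exists sigma', ctrace tau trans C s sigma' /\ proper_prefix sigma sigma'.
Proof.
  intros Hp Hm Hc [sigma' [[u' [Hp' Hc']] [_ Hpp]]].
  destruct (fin_path_fin_trace Hc) as [l Hl].
  destruct (enum_of Hc) as [K HE]. rewrite Hl in HE.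
  pose proof (col_end HE) as CE.
  destruct (enum_of Hc') as [K' HE'].
  unfold proper_prefix in Hpp. rewrite Hl in Hpp.
  assert (exists x, nth_opt (snd sigma') (length l) = Some x /\
            forall c, colat (C s) (SFin l) (length l) c -> colat (C s) (snd sigma') (length l) c)
    as [x [Ex Hcol]].
  { destruct (snd sigma') as [l'|g].
    - destruct Hpp as [m [Hm0 ->]]. destruct m as [|y m]; [congruence|].
      exists y. split; [simpl; rewrite nth_error_app2, Nat.sub_diag by lia; auto|].
      intros c. destruct (length l) as [|j0] eqn:HL; simpl; auto.
      intros [a E]. exists a. rewrite nth_error_app1 by lia. auto.
    - exists (g (length l)). split; [auto|].
      intros c. destruct (length l) as [|j0] eqn:HL; simpl; auto.
      intros [a E]. exists a. rewrite Hpp in E by lia. congruence. }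
  pose proof (@col_before s u' (snd sigma') K' (length l) x HE' Ex) as CB.
  pose proof (@colat_fun _ _ _ _ _ (Hcol _ CE) CB) as Ceq.
  destruct HE' as [H1 _].
  destruct (H1 _ _ Ex) as [a [t [Et [_ Hk]]]].
  assert (Hk' : a <> tau \/ C t <> C (prev s u' (K' (length l)))).
  { destruct Hk as [a' [t' [E' Hk]]]. rewrite Et in E'. inversion E'; subst; auto. }
  pose proof (one_step (Hp' _ _ _ Et) Hk') as Hos.
  apply (cons _ _ (eq_sym Ceq)) in Hos.
  destruct Hos as [u'' [Hp'' Hc'']].
  destruct (enum_of Hc'') as [K'' [H1'' _]].
  destruct (H1'' 0 (a, C t) eq_refl) as [a1 [t1 [E1 _]]].
  destruct (@nth_opt_closed u'' 0 _ _ E1 ltac:(lia)) as [[a0 t0] E0].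
  apply (Hm a0 t0). apply (Hp'' _ _ _ E0).
Qed.


Lemma F2_in X Y (R R' : X -> Y -> Prop) a b :
  Forall2 R a b -> (forall n x, In n a -> R n x -> R' n x) -> Forall2 R' a b.
Proof.
  induction 1; intros H'; constructor.
  - apply H'; simpl; auto.
  - apply IHForall2. intros; apply H'; simpl; auto.
Qed.

Lemma col_transfer s u u' sigma :
  (forall n, kept tau C s u' n <-> kept tau C s u n) ->
  (forall n, kept tau C s u n -> nth_opt u' n = nth_opt u n) ->
  colouring_of tau C s u sigma -> colouring_of tau C s u' sigma.
Proof.
  intros Hk Hn [Hf H]. split; auto. destruct (snd sigma) as [l|g].
  - destruct H as [idx [Hs [Hi HF]]]. exists idx. split; [auto|split].
    + intros n. rewrite Hk. auto.
    + eapply F2_in; [exact HF|]. intros n x Hin [a [t [E1 E2]]]. exists a, t.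
      rewrite Hn; auto. apply Hi; auto.
  - destruct H as [h [Hm [Hi Hg]]]. exists h. split; [auto|split].
    + intros n. rewrite Hk. auto.
    + intros k. destruct (Hg k) as [a [t [E1 E2]]]. exists a, t. rewrite Hn; auto.
      apply Hi; eauto.
Qed.

Lemma kept_lt s lu n : kept tau C s (SFin lu) n -> n < length lu.
Proof. intros [a [t [E _]]]. simpl in E. apply nth_error_Some; congruence. Qed.

Lemma kept_app s (L m : list (Act*St)) n :
  n < length L -> (kept tau C s (SFin (L ++ m)) n <-> kept tau C s (SFin L) n).
Proof.
  intros Hn. apply kept_agree. intros j Hj. simpl. rewrite nth_error_app1 by lia. auto.
Qed.

Lemma path_snoc s (L : list (Act*St)) a t :
  is_path trans s (SFin L) -> trans (prev s (SFin L) (length L)) a t ->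
  is_path trans s (SFin (L ++ [(a,t)])).
Proof.
  intros Hp Ht i b t' E.
  assert (Hpr : prev s (SFin (L ++ [(a,t)])) i = prev s (SFin L) i).
  { apply prev_agree. intros j Hj. simpl.
    assert (i < length (L ++ [(a,t)])) by (simpl in E; apply nth_error_Some; congruence).
    rewrite length_app in H; simpl in H.
    rewrite nth_error_app1 by lia. auto. }
  rewrite Hpr. simpl in E.
  destruct (Nat.lt_ge_cases i (length L)).
  - rewrite nth_error_app1 in E by lia. apply Hp. auto.
  - rewrite nth_error_app2 in E by lia.
    destruct (i - length L) eqn:D; simpl in E; [|destruct n; discriminate].
    inversion E; subst. replace i with (length L) by lia. auto.
Qed.

Lemma ss_snoc (idx : list nat) N :
  StronglySorted lt idx -> (forall k, In k idx -> k < N) -> StronglySorted lt (idx ++ [N]).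
Proof.
  induction 1 as [|x l H IH Hf]; intros Hb; simpl.
  - repeat constructor.
  - constructor.
    + apply IH. intros; apply Hb; simpl; auto.
    + apply Forall_app; split; auto. constructor; [apply Hb; simpl; auto|constructor].
Qed.

Lemma ext1 s (L : list (Act*St)) c l a t :
  is_path trans s (SFin L) -> colouring_of tau C s (SFin L) (c, SFin l) ->
  trans (prev s (SFin L) (length L)) a t ->
  kept tau C s (SFin (L ++ [(a,t)])) (length L) ->
  ctrace tau trans C s (c, SFin (l ++ [(a, C t)])).
Proof.
  intros Hp [Hf [idx [Hs [Hi HF]]]] Ht Hk. exists (SFin (L ++ [(a,t)])).
  split; [apply path_snoc; auto|]. split; [auto|]. simpl.
  assert (Hb : forall k, In k idx -> k < length L) by (intros k Hk'; apply Hi in Hk'; eapply kept_lt; eauto).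
  exists (idx ++ [length L]). split; [apply ss_snoc; auto|split].
  - intros n. rewrite in_app_iff. simpl.
    destruct (Nat.lt_total n (length L)) as [Hl|[He|Hg]].
    + rewrite kept_app, Hi by auto. split; [tauto|]. intros [?|[?|[]]]; auto; lia.
    + subst. split; auto.
    + split.
      * intros Hk'. apply kept_lt in Hk'. rewrite length_app in Hk'; simpl in Hk'. lia.
      * intros [Hin|[?|[]]]; [apply Hb in Hin|]; lia.
  - apply Forall2_app.
    + eapply F2_in; [exact HF|]. intros n x Hin [a' [t' [E1 E2]]]. exists a', t'.
      simpl. rewrite nth_error_app1 by (apply Hb; auto). auto.
    + constructor; [|constructor]. exists a, t. simpl. rewrite nth_error_app2, Nat.sub_diag by lia. auto.
Qed.


Lemma rev_fin s lu sigma :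
  is_path trans s (SFin lu) -> colouring_of tau C s (SFin lu) sigma ->
  ~ (exists sigma', ctrace tau trans C s sigma' /\ proper_prefix sigma sigma') ->
  complete_ctrace tau trans C s sigma.
Proof.
  intros Hp Hc Hno.
  destruct (fin_path_fin_trace Hc) as [l Hl].
  set (Ext := fun m => is_path trans s (SFin (lu ++ m)) /\
                forall n, length lu <= n -> ~ kept tau C s (SFin (lu ++ m)) n).
  assert (Hek : forall m, Ext m -> forall n,
             kept tau C s (SFin (lu ++ m)) n <-> kept tau C s (SFin lu) n).
  { intros m [_ He] n. destruct (Nat.lt_ge_cases n (length lu)).
    - apply kept_app; auto.
    - split; intro K; [exfalso; eapply He; eauto|apply kept_lt in K; lia]. }
  assert (Hec : forall m, Ext m -> colouring_of tau C s (SFin (lu ++ m)) sigma).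
  { intros m Hm. eapply col_transfer; [apply Hek; auto| |exact Hc].
    intros n Kn. apply kept_lt in Kn. simpl. rewrite nth_error_app1; auto. }
  assert (E0 : Ext []).
  { unfold Ext; rewrite app_nil_r. split; auto. intros n Hn K. apply kept_lt in K. lia. }
  assert (Hstep : forall m, Ext m ->
     (forall a t, ~ trans (prev s (SFin (lu ++ m)) (length (lu ++ m))) a t) \/
     exists p, Ext (m ++ [p])).
  { intros m Hm. destruct (classic (exists a t, trans (prev s (SFin (lu ++ m)) (length (lu ++ m))) a t))
      as [[a [t Ht]]|N]; [right|left; firstorder].
    destruct (classic (kept tau C s (SFin ((lu ++ m) ++ [(a,t)])) (length (lu ++ m)))) as [K|NK].
    - exfalso. apply Hno.
      pose proof (Hec m Hm) as Hc'. destruct sigma as [c sq]. simpl in Hl; subst sq.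
      exists (c, SFin (l ++ [(a, C t)])). split.
      + apply ext1 with (L := lu ++ m); auto. apply Hm.
      + split; [auto|]. simpl. exists [(a, C t)]. split; [discriminate|auto].
    - exists (a,t). split.
      + rewrite app_assoc. apply path_snoc; auto. apply Hm.
      + intros n Hn. rewrite app_assoc.
        destruct (Nat.lt_total n (length (lu ++ m))) as [Hl'|[He|Hg]].
        * rewrite kept_app by auto. apply Hm; auto.
        * subst; auto.
        * intro K. apply kept_lt in K. rewrite length_app in K; simpl in K. lia. }
  destruct (classic (exists m, Ext m /\
       forall a t, ~ trans (prev s (SFin (lu ++ m)) (length (lu ++ m))) a t)) as [[m [Hm Hd]]|ND].
  { exists (SFin (lu ++ m)). split; [apply Hm|split; [exact Hd|auto]]. }
  assert (Hall : forall m, Ext m -> exists p, Ext (m ++ [p])).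
  { intros m Hm. destruct (Hstep m Hm) as [D|P]; auto. exfalso; eauto. }
  destruct (Hall [] E0) as [p0 _].
  assert (Hg : forall m, exists p, Ext m -> Ext (m ++ [p])).
  { intros m. destruct (classic (Ext m)) as [H|H].
    - destruct (Hall m H) as [p Hp']. exists p; auto.
    - exists p0; tauto. }
  set (g := fun m => proj1_sig (constructive_indefinite_description _ (Hg m))).
  assert (Hgs : forall m, Ext m -> Ext (m ++ [g m]))
    by (intros m; exact (proj2_sig (constructive_indefinite_description _ (Hg m)))).
  set (ms := fun n => nat_rect (fun _ => list (Act*St)) [] (fun _ r => r ++ [g r]) n).
  assert (msS : forall n, ms (S n) = ms n ++ [g (ms n)]) by reflexivity.
  assert (msE : forall n, Ext (ms n)) by (induction n; [exact E0|rewrite msS; auto]).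
  assert (msL : forall n, length (ms n) = n)
    by (induction n; [reflexivity|rewrite msS, length_app; simpl; lia]).
  assert (msP : forall a d, exists r, ms (a + d) = ms a ++ r).
  { intros a d. induction d as [|d [r IH]]; [exists []; rewrite Nat.add_0_r, app_nil_r; auto|].
    exists (r ++ [g (ms (a + d))]). rewrite Nat.add_succ_r, msS, IH, app_assoc. auto. }
  assert (nthP : forall a d j, j < length lu + a ->
             nth j (lu ++ ms a) p0 = nth j (lu ++ ms (a + d)) p0).
  { intros a d j Hj. destruct (msP a d) as [r ->]. symmetry. rewrite app_assoc, app_nth1; auto.
    rewrite length_app, msL; auto. }
  set (f := fun i => nth i (lu ++ ms (S i)) p0).
  assert (agree : forall N j, j < length lu + N ->
             nth_opt (SInf f) j = nth_opt (SFin (lu ++ ms N)) j).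
  { intros N j Hj. simpl. rewrite nth_error_nth' with (d := p0)
      by (rewrite length_app, msL; lia).
    f_equal. unfold f. rewrite (nthP (S j) N j) by lia. rewrite (nthP N (S j) j) by lia.
    rewrite Nat.add_comm. auto. }
  exists (SInf f). split; [|split; [exact I|]].
  - intros i a t E.
    rewrite (prev_agree s (SInf f) (SFin (lu ++ ms (S i)))) by (intros; apply agree; lia).
    apply (proj1 (msE (S i))). rewrite <- agree by lia. auto.
  - eapply col_transfer; [| |exact Hc].
    + intros n. rewrite (kept_agree s (SInf f) (SFin (lu ++ ms (S n))))
        by (intros; apply agree; lia). apply Hek, msE.
    + intros n Kn. apply kept_lt in Kn. rewrite (agree (S n)) by lia. simpl.
      rewrite nth_error_app1; auto.
Qed.

End H.

Theorem lemma3p7 (Act : Type) (tau : Act) (St : Type)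
    (trans : St -> Act -> St -> Prop) (Col : Type) (C : St -> Col) :
  consistent tau trans C ->
  forall (s : St) (sigma : cseq Act Col),
    complete_ctrace tau trans C s sigma <->
    ((ctrace tau trans C s sigma /\ is_infinite_seq sigma) \/
     divergent_ctrace tau trans C s sigma \/
     (ctrace tau trans C s sigma /\
      ~ (exists sigma', ctrace tau trans C s sigma' /\ proper_prefix sigma sigma'))).
Proof.
  intros cons s sigma. split.
  - intros [u [Hp [Hm Hc]]]. destruct u as [lu|f].
    + right; right. split; [exists (SFin lu); auto|]. eapply fwd_fin; eauto.
    + destruct (snd sigma) eqn:E.
      * right; left. exists f. split; [auto|split; [auto|]]. unfold is_infinite_seq. rewrite E. auto.
      * left. split; [exists (SInf f); auto|]. unfold is_infinite_seq. rewrite E. exact I.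
  - intros [[[u [Hp Hc]] Hi]|[[f [Hp [Hc _]]]|[[u [Hp Hc]] Hno]]].
    + destruct u as [lu|f].
      * destruct (fin_path_fin_trace Hc) as [l Hl]. unfold is_infinite_seq in Hi.
        rewrite Hl in Hi. destruct Hi.
      * exists (SInf f). split; [auto|split; [exact I|auto]].
    + exists (SInf f). split; [auto|split; [exact I|auto]].
    + destruct u as [lu|f].
      * eapply rev_fin; eauto.
      * exists (SInf f). split; [auto|split; [exact I|auto]].
Qed.
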